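(* Let $R>0$, $h>0$, $g_1>0$ be reals and $\lambda_2>0$, and let $G$ be an exponential random variable with rate $\lambda_2$ (representing $g_2^2$). For $\Delta>0$ define (logarithms base $2$, $[x]^+=\max\{x,0\}$) $$R_{\mathrm{QMF}}(\Delta)=\Big[\min\Big\{\log\Big(1+\frac{h^2}{1+\Delta}+G\Big),\ \log(1+g_1^2+G)-\log\frac{1+\Delta}{\Delta}\Big\}\Big]^+,$$ and the conditional outage probability $P(\Delta)=\Pr\{R>R_{\mathrm{QMF}}(\Delta)\}$. Then $P(\Delta)$ is minimized over $\Delta>0$ at $$\Delta^*=\frac{\sqrt{(g_1^2-h^2-2^R)^2+4g_1^22^R}-(g_1^2-h^2-2^R)}{2g_1^2},$$ the positive root of $g_1^2\Delta^2+(g_1^2-h^2-2^R)\Delta-2^R=0$.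
   Context: This is the full-duplex Gaussian single-relay channel ($Y_r=\mathsf hX+Z_r$, $Y=\mathsf g_1X_r+\mathsf g_2X+Z$, unit powers and noise) under Rayleigh fading, where the relay knows the realizations of its incoming and outgoing magnitudes $h=|\mathsf h|$, $g_1=|\mathsf g_1|$ but not $g_2=|\mathsf g_2|$, for which $g_2^2$ is exponential with rate $\lambda_2$. The relay quantizes with a Gaussian vector quantizer of distortion $\Delta$, and $R_{\mathrm{QMF}}(\Delta)$ is the resulting quantize-map-and-forward rate; $P(\Delta)$ is the outage probability at rate $R$ conditioned on $h,g_1$. *)

(* Defs.v *)
From HB Require Import structures.
From mathcomp Require Import all_boot all_order all_algebra.
From mathcomp Require Import all_classical all_reals all_analysis.
Set Implicit Arguments. Unset Strict Implicit. Unset Printing Implicit Defensive.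
Import Order.TTheory GRing.Theory Num.Theory.
Local Open Scope ring_scope.
Local Open Scope classical_set_scope.

Definition log2 {R : realType} (x : R) : R := ln x / ln 2.

Definition pospart {R : realType} (x : R) : R := Num.max x 0.

(* QMF rate as a function of the distortion Delta and of the realization g = g2^2 *)
Definition R_QMF {R : realType} (h g1 Delta g : R) : R :=
  pospart (Num.min (log2 (1 + h ^+ 2 / (1 + Delta) + g))
                   (log2 (1 + g1 ^+ 2 + g) - log2 ((1 + Delta) / Delta))).

Definition outage {R : realType} {d : measure_display} {T : measurableType d}
  (P : probability T R) (G : T -> R) (Rt h g1 Delta : R) : \bar R :=
  P [set t | Rt > R_QMF h g1 Delta (G t)].

Definition Delta_star {R : realType} (Rt h g1 : R) : R :=
  let b := g1 ^+ 2 - h ^+ 2 - 2 `^ Rt in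
  (Num.sqrt (b ^+ 2 + 4 * g1 ^+ 2 * 2 `^ Rt) - b) / (2 * g1 ^+ 2).

(* Main.v *)
Require Import Defs.
From HB Require Import structures.
From mathcomp Require Import all_boot all_order all_algebra.
From mathcomp Require Import all_classical all_reals all_analysis.
From mathcomp Require Import measurable_realfun ring lra.
Import Order.TTheory GRing.Theory Num.Theory.
Local Open Scope ring_scope.
Local Open Scope classical_set_scope.

Section S.
Variable R : realType.

Lemma ln2_gt0 : 0 < ln (2:R).
Proof. by apply: ln_gt0; rewrite ltr1n. Qed.

Lemma log2_ltE (x c : R) : 0 < x -> (log2 x < c) = (x < 2 `^ c).
Proof.
move=> x0; rewrite /log2 ltr_pdivrMr ?ln2_gt0 // -ln_powR ltr_ln //.
by rewrite posrE powR_gt0.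
Qed.

Lemma outE (Rt h g1 D g : R) : 0 < Rt -> 0 < D -> 0 <= g ->
  (Rt > R_QMF h g1 D g) =
  ((g < 2 `^ Rt - 1 - h ^+ 2 / (1 + D)) || (g < 2 `^ Rt * (1 + D) / D - 1 - g1 ^+ 2)).
Proof.
move=> Rt0 D0 g0.
have D1 : 0 < 1 + D by lra.
have hD : 0 <= h ^+ 2 / (1 + D) by rewrite divr_ge0 ?sqr_ge0 ?ltW.
have g2 : 0 <= g1 ^+ 2 by rewrite sqr_ge0.
rewrite /R_QMF /pospart gt_max Rt0 andbT gt_min.
congr orb.
  rewrite log2_ltE; last by lra.
  apply/idP/idP; lra.
have -> : log2 (1 + g1 ^+ 2 + g) - log2 ((1 + D) / D)
   = log2 ((1 + g1 ^+ 2 + g) / ((1 + D) / D)).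
  have q0 : 0 < (1 + D) / D by rewrite divr_gt0.
  rewrite /log2 -mulrBl; congr (_ / _).
  by rewrite [RHS]lnM ?lnV // posrE ?invr_gt0 //; lra.
rewrite log2_ltE; last by rewrite divr_gt0 ?divr_gt0 //; lra.
rewrite ltr_pdivrMr ?divr_gt0 // mulrA.
apply/idP/idP; lra.
Qed.

Lemma DstarP (Rt h g1 : R) : 0 < g1 ->
  0 < Delta_star Rt h g1 /\
  g1 ^+ 2 * Delta_star Rt h g1 ^+ 2
    + (g1 ^+ 2 - h ^+ 2 - 2 `^ Rt) * Delta_star Rt h g1 - 2 `^ Rt = 0.
Proof.
move=> g10; rewrite /Delta_star.
set b := g1 ^+ 2 - h ^+ 2 - 2 `^ Rt.
set c := 2 `^ Rt.
have c0 : 0 < c by rewrite powR_gt0.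
have a0 : 0 < g1 ^+ 2 by rewrite exprn_gt0.
have disc0 : 0 <= b ^+ 2 + 4 * g1 ^+ 2 * c.
  by rewrite addr_ge0 ?sqr_ge0 // ?mulr_ge0 // ltW.
have sq := sqr_sqrtr disc0.
set s := Num.sqrt _ in sq *.
have s0 : 0 <= s by rewrite sqrtr_ge0.
split.
  rewrite divr_gt0 //; last by rewrite mulr_gt0.
  rewrite subr_gt0.
  have hp : 0 < 4 * g1 ^+ 2 * c by rewrite !mulr_gt0.
  have spos : 0 < s.
    rewrite sqrtr_gt0; have := sqr_ge0 b; lra.
  case: (lerP b 0) => hb; first by lra.
  rewrite -(ltr_pXn2r (n:=2)) //; last by rewrite nnegrE ltW.
  by rewrite sq; lra.
have a0' : g1 ^+ 2 != 0 by rewrite gt_eqF.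
have -> : g1 ^+ 2 * ((s - b) / (2 * g1 ^+ 2)) ^+ 2 + b * ((s - b) / (2 * g1 ^+ 2)) - c
   = (s ^+ 2 - (b ^+ 2 + 4 * g1 ^+ 2 * c)) / (4 * g1 ^+ 2).
  by field; rewrite gt_eqF.
by rewrite sq subrr mul0r.
Qed.
Lemma mR_QMF (h g1 D : R) : measurable_fun setT (R_QMF h g1 D).
Proof.
have mlog (a : R) : measurable_fun setT (fun g : R => log2 (a + g)).
  rewrite /log2; apply: measurable_funM; last exact: measurable_cst.
  apply: measurableT_comp; first exact: measurable_ln.
  by apply: measurable_funD; [exact: measurable_cst|exact: measurable_id].
rewrite /R_QMF /pospart.
apply: (measurable_maxr (f := fun g => Num.min _ _) (g := cst 0)); last exact: measurable_cst.
apply: (measurable_minr (f := fun g => _) (g := fun g => _)).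
  exact: (mlog (1 + h ^+ 2 / (1 + D))).
apply: measurable_funB; last exact: measurable_cst.
exact: (mlog (1 + g1 ^+ 2)).
Qed.


Lemma fcross (Rt h g1 D : R) : 0 < D ->
  g1 ^+ 2 * D ^+ 2 + (g1 ^+ 2 - h ^+ 2 - 2 `^ Rt) * D - 2 `^ Rt = 0 ->
  2 `^ Rt - 1 - h ^+ 2 / (1 + D) = 2 `^ Rt * (1 + D) / D - 1 - g1 ^+ 2.
Proof.
move=> D0 Q; apply/eqP; rewrite -subr_eq0; apply/eqP.
have D1 : 1 + D != 0 by rewrite gt_eqF //; lra.
have -> : 2 `^ Rt - 1 - h ^+ 2 / (1 + D) - (2 `^ Rt * (1 + D) / D - 1 - g1 ^+ 2)
  = (g1 ^+ 2 * D ^+ 2 + (g1 ^+ 2 - h ^+ 2 - 2 `^ Rt) * D - 2 `^ Rt) / (D * (1 + D)).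
  by field; rewrite D1 gt_eqF.
by rewrite Q mul0r.
Qed.

Lemma mono_pt (Rt h g1 Ds D g : R) : 0 < Ds -> 0 < D ->
  2 `^ Rt - 1 - h ^+ 2 / (1 + Ds) = 2 `^ Rt * (1 + Ds) / Ds - 1 - g1 ^+ 2 ->
  (g < 2 `^ Rt - 1 - h ^+ 2 / (1 + Ds)) || (g < 2 `^ Rt * (1 + Ds) / Ds - 1 - g1 ^+ 2) ->
  (g < 2 `^ Rt - 1 - h ^+ 2 / (1 + D)) || (g < 2 `^ Rt * (1 + D) / D - 1 - g1 ^+ 2).
Proof.
move=> Ds0 D0 e H.
have H' : g < 2 `^ Rt - 1 - h ^+ 2 / (1 + Ds) by case/orP: H; rewrite ?e.
have c0 : 0 < 2 `^ Rt by rewrite powR_gt0.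
case: (lerP Ds D) => hD.
  apply/orP; left; apply: (lt_le_trans H').
  rewrite lerD2l lerN2 ler_wpM2l ?sqr_ge0 //.
  have := @lef_pV2 R (1 + D) (1 + Ds); rewrite !posrE => ->; lra.
apply/orP; right; rewrite e in H'; apply: (lt_le_trans H').
rewrite lerD2r lerD2r.
have E (x : R) : 0 < x -> 2 `^ Rt * (1 + x) / x = 2 `^ Rt + 2 `^ Rt * x^-1.
  by move=> x0; field; rewrite gt_eqF.
rewrite !E // lerD2l ler_wpM2l ?ltW //.
have := @ltf_pV2 R Ds D; rewrite !posrE => ->; lra.
Qed.

End S.

Theorem mainTheorem9 (R : realType) (d : measure_display) (T : measurableType d)
  (P : probability T R) (G : T -> R) (lambda2 Rt h g1 : R) :
  0 < Rt -> 0 < h -> 0 < g1 -> 0 < lambda2 ->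
  measurable_fun setT G ->
  (forall A : set R, measurable A ->
     P (G @^-1` A) = exponential_prob lambda2 A) ->
  0 < Delta_star Rt h g1 /\
  g1 ^+ 2 * Delta_star Rt h g1 ^+ 2
    + (g1 ^+ 2 - h ^+ 2 - 2 `^ Rt) * Delta_star Rt h g1 - 2 `^ Rt = 0 /\
  (forall Delta : R, 0 < Delta ->
     (outage P G Rt h g1 (Delta_star Rt h g1) <= outage P G Rt h g1 Delta)%E).
Proof.
move=> Rt0 h0 g10 l0 mG HP.
have [Ds0 Q] := @DstarP R Rt h g1 g10.
split => //; split => // D D0.
set Ds := Delta_star Rt h g1 in Ds0 Q *.
have e := @fcross R Rt h g1 Ds Ds0 Q.
have mS (x : R) : measurable [set t | Rt > R_QMF h g1 x (G t)].
  have -> : [set t | Rt > R_QMF h g1 x (G t)]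
     = setT `&` G @^-1` (setT `&` R_QMF h g1 x @^-1` [set` `]-oo, Rt[%R]).
    by apply/seteqP; split => t /=; rewrite in_itv /=; [move=> ?; split|case=> _ []].

  apply: mG => //; apply: mR_QMF => //; exact: measurable_itv.
pose N := G @^-1` [set` `]-oo, (0:R)[%R].
have mN : measurable N.
  by rewrite /N -[X in measurable X]setTI; apply: mG => //; exact: measurable_itv.
have PN : P N = 0%E.
  rewrite /N HP; last exact: measurable_itv.
  rewrite /exponential_prob integral0_eq // => x /=; rewrite in_itv /= => x0.
  by rewrite lt0_exponential_pdf.
rewrite /outage.
apply: (@le_trans _ _ (P ([set t | Rt > R_QMF h g1 D (G t)] `|` N))).
  apply: le_measure; rewrite ?inE //; first exact: measurableU.
  move=> t /= Ht.
  case: (ltP (G t) 0) => gt0; first by right; rewrite /N /= in_itv.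
  left.
  rewrite (@outE R Rt h g1 D (G t) Rt0 D0 gt0).
  rewrite (@outE R Rt h g1 Ds (G t) Rt0 Ds0 gt0) in Ht.
  exact: (@mono_pt R Rt h g1 Ds D (G t) Ds0 D0 e Ht).
apply: (le_trans (measureU2 P (mS D) mN)).
apply: (@le_trans _ _ (P [set t | (Rt > R_QMF h g1 D (G t))%R] + 0)%E); last by rewrite adde0.
apply: leeD => //.
by rewrite le_eqVlt; apply/orP; left; apply/eqP; exact: PN.
Qed.
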